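(* Let $\zeta(dx)=e^{-U(x)}dx$ be a probability measure on $\mathbb R^d$ with $U\in C^2(\mathbb R^d)$, and suppose there exist $\alpha_U>0$ and $\tilde g_U\in\tilde{\mathcal G}$ such that $\kappa_U(r)\ge\alpha_U-r^{-1}\tilde g_U(r)$ for all $r>0$. Then for every $\sigma\in(0,\alpha_U/2)$, $\int\exp(\sigma|x|^2)\,\zeta(dx)<+\infty$.
   Context: For differentiable $U:\mathbb R^d\to\mathbb R$ and $r>0$, $\kappa_U(r):=\inf\{\langle\nabla U(x)-\nabla U(y),x-y\rangle/|x-y|^2: x,y\in\mathbb R^d,\ |x-y|=r\}$. $\mathcal G$ is the set of $g\in C^2((0,\infty),[0,\infty))$ such that $r\mapsto r^{1/2}g(r^{1/2})$ is non-decreasing and concave and $\lim_{r\downarrow0}rg(r)=0$; $\tilde{\mathcal G}$ is the set of bounded $g\in\mathcal G$ with $\lim_{r\downarrow0}g(r)=0$, $g'\ge0$ and $2g''+gg'\le0$. *)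

(* Defs.v *)
From mathcomp Require Import all_boot all_order all_algebra.
From mathcomp Require Import all_classical all_reals all_analysis.
Set Implicit Arguments. Unset Strict Implicit. Unset Printing Implicit Defensive.
Import Order.TTheory GRing.Theory Num.Theory numFieldNormedType.Exports.
Local Open Scope classical_set_scope.
Local Open Scope ring_scope.

Section Defs.
Variable R : realType.

Definition dotv (d : nat) (x y : 'rV[R]_d) : R := \sum_(i < d) x 0 i * y 0 i.
Definition enorm2 (d : nat) (x : 'rV[R]_d) : R := dotv x x.
Definition enorm (d : nat) (x : 'rV[R]_d) : R := Num.sqrt (enorm2 x).

Definition partialD (d : nat) (i : 'I_d) (U : 'rV[R]_d -> R) (x : 'rV[R]_d) : R :=
  'D_(delta_mx 0 i) U x.
Definition grad (d : nat) (U : 'rV[R]_d -> R) (x : 'rV[R]_d) : 'rV[R]_d :=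
  \row_i partialD i U x.

Definition C2 (d : nat) (U : 'rV[R]_d -> R) : Prop :=
  (forall x, differentiable U x) /\
  (forall x, differentiable (grad U) x) /\
  (forall (i j : 'I_d), continuous (fun x : 'rV[R]_d => partialD j (partialD i U) x)).

Definition kappa (d : nat) (U : 'rV[R]_d -> R) (r : R) : \bar R :=
  ereal_inf [set z : \bar R | exists x y : 'rV[R]_d, enorm (x - y) = r /\
              z = ((dotv (grad U x - grad U y) (x - y)) / enorm2 (x - y))%:E].

Definition vcons (n : nat) (t : R) (v : 'rV[R]_n) : 'rV[R]_n.+1 :=
  \row_(i < n.+1) match unlift ord0 i with None => t | Some j => v 0 j end.

(* Lebesgue integral over R^n of a nonnegative function, as the iterated
   one-dimensional Lebesgue integral (equal to the integral w.r.t. the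
   n-dimensional Lebesgue measure for nonnegative measurable f, by Tonelli). *)
Fixpoint lebint (n : nat) : ('rV[R]_n -> \bar R) -> \bar R :=
  match n with
  | 0 => fun f => f 0
  | n'.+1 => fun f =>
      (\int[@lebesgue_measure R]_(t in [set: R]) lebint (fun v => f (vcons t v)))%E
  end.

Definition classG (g : R -> R) : Prop :=
  [/\ (forall r, 0 < r -> 0 <= g r),
      (forall r, 0 < r -> derivable g r 1 /\ derivable (derive1 g) r 1
                         /\ {for r, continuous (derive1n 2 g)}),
      (forall a b, 0 < a -> a <= b ->
         Num.sqrt a * g (Num.sqrt a) <= Num.sqrt b * g (Num.sqrt b)),
      (forall a b t, 0 < a -> 0 < b -> 0 <= t <= 1 ->
         t * (Num.sqrt a * g (Num.sqrt a)) + (1 - t) * (Num.sqrt b * g (Num.sqrt b))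
         <= Num.sqrt (t * a + (1 - t) * b) * g (Num.sqrt (t * a + (1 - t) * b)))
    & (r * g r) @[r --> 0^'+] --> 0].

Definition classGt (g : R -> R) : Prop :=
  [/\ classG g,
      (exists M, forall r, 0 < r -> g r <= M),
      g r @[r --> 0^'+] --> 0,
      (forall r, 0 < r -> 0 <= (derive1 g) r)
    & (forall r, 0 < r -> 2 * (derive1n 2 g) r + g r * (derive1 g) r <= 0)].

End Defs.

(* Main.v *)
Require Import Defs.
From mathcomp Require Import all_boot all_order all_algebra.
From mathcomp Require Import all_classical all_reals all_analysis.
From mathcomp Require Import ring lra.
Import Order.TTheory GRing.Theory Num.Theory numFieldNormedType.Exports.
Local Open Scope classical_set_scope.
Local Open Scope ring_scope.

Set Implicit Arguments. Unset Strict Implicit. Unset Printing Implicit Defensive.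
Section S.
Variable R : realType.
Local Notation mu := (@lebesgue_measure R).

Lemma le_int_ge0 (F G : R -> \bar R) : (forall t, (0 <= F t)%E) ->
  (forall t, (F t <= G t)%E) ->
  (\int[mu]_(t in [set: R]) F t <= \int[mu]_(t in [set: R]) G t)%E.
Proof.
move=> F0 FG; have G0 t : (0 <= G t)%E by apply: le_trans (FG t).
rewrite !ge0_integralTE //; apply: le_ereal_sup => _ [h hF <-].
by exists h => // x; apply: le_trans (FG x).
Qed.

Lemma lebint_ge0 n (f : 'rV[R]_n -> \bar R) : (forall x, (0 <= f x)%E) ->
  (0 <= lebint f)%E.
Proof.
elim: n f => [|n IH] f f0 /=; first exact: f0.
by apply: integral_ge0 => t _; apply: IH.
Qed.

Lemma lebint_le n (f g : 'rV[R]_n -> \bar R) : (forall x, (0 <= f x)%E) ->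
  (forall x, (f x <= g x)%E) -> (lebint f <= lebint g)%E.
Proof.
elim: n f g => [|n IH] f g f0 fg /=; first exact: fg.
apply: le_int_ge0 => t; first exact: lebint_ge0.
by apply: IH.
Qed.

Lemma vcons0 n t (v : 'rV[R]_n) : vcons t v 0 ord0 = t.
Proof. by rewrite /vcons mxE unlift_none. Qed.

Lemma vconsS n t (v : 'rV[R]_n) j : vcons t v 0 (lift ord0 j) = v 0 j.
Proof. by rewrite /vcons mxE liftK. Qed.

Lemma lebint_prod (p : R -> R) : (forall t, 0 <= p t) ->
  mu.-integrable [set: R] (fun t => (p t)%:E) ->
  (\int[mu]_t (p t)%:E = 1)%E ->
  forall n c, 0 <= c ->
  (lebint (fun v : 'rV[R]_n => (c * \prod_(i < n) p (v 0 i))%:E) <= c%:E)%E.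
Proof.
move=> p0 ip p1; elim=> [|n IH] c c0 /=; first by rewrite big_ord0 mulr1.
apply: (@le_trans _ _ (\int[mu]_(t in [set: R]) ((c * p t)%:E))%E).
  apply: le_int_ge0 => t.
    by apply: lebint_ge0 => v; rewrite lee_fin mulr_ge0 // prodr_ge0.
  have -> : (fun v : 'rV[R]_n => (c * \prod_(i < n.+1) p (vcons t v 0 i))%:E) =
     (fun v => (c * p t * \prod_(i < n) p (v 0 i))%:E).
    apply: funext => v; rewrite big_ord_recl vcons0 mulrA; congr (_ * _)%:E.
    by apply: eq_bigr => i _; rewrite vconsS.
  by apply: IH; rewrite mulr_ge0.
under eq_integral do rewrite EFinM.
by rewrite integralZl // p1 mule1.
Qed.
Lemma pdfE (dl : R) t : 0 < dl ->
  normal_pdf 0 (Num.sqrt dl^-1) t = normal_peak (Num.sqrt dl^-1) * expR (- (dl / 2 * t ^+ 2)).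
Proof.
move=> dl0.
have s0 : Num.sqrt dl^-1 != 0 by rewrite gt_eqF // sqrtr_gt0 invr_gt0.
rewrite normal_pdfE //=; congr (_ * expR _).
rewrite /normal_fun subr0 sqr_sqrtr ?invr_ge0 ?ltW //.
by field; rewrite gt_eqF.
Qed.

Lemma enorm2_ge0 n (x : 'rV[R]_n) : 0 <= enorm2 x.
Proof. by apply: sumr_ge0 => i _; rewrite -expr2 sqr_ge0. Qed.

Lemma enorm2Z n (t : R) (x : 'rV[R]_n) : enorm2 (t *: x) = t ^+ 2 * enorm2 x.
Proof.
rewrite /enorm2 /dotv mulr_sumr; apply: eq_bigr => i _; rewrite !mxE; ring.
Qed.

Lemma enormZ n (t : R) (x : 'rV[R]_n) : 0 <= t -> enorm (t *: x) = t * enorm x.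
Proof. by move=> t0; rewrite /enorm enorm2Z sqrtrM ?sqr_ge0 // sqrtr_sqr ger0_norm. Qed.

Lemma dotvZ n (t : R) (x y : 'rV[R]_n) : dotv x (t *: y) = t * dotv x y.
Proof. rewrite /dotv mulr_sumr; apply: eq_bigr => i _; rewrite !mxE; ring. Qed.

Lemma dotvB n (x y z : 'rV[R]_n) : dotv (x - y) z = dotv x z - dotv y z.
Proof. rewrite /dotv -sumrB; apply: eq_bigr => i _; rewrite !mxE; ring. Qed.

Lemma enorm2_eq0 n (x : 'rV[R]_n) : enorm2 x = 0 -> x = 0.
Proof.
move=> /eqP; rewrite /enorm2 /dotv psumr_eq0 => [/allP H|i _]; last by rewrite -expr2 sqr_ge0.
apply/matrixP => i j; rewrite !mxE (ord1 i).
by have /(_ (mem_index_enum _))/implyP/(_ isT) := H j; rewrite mulf_eq0 orbb => /eqP.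
Qed.

Lemma kappa_bound d (U : 'rV[R]_d -> R) alphaU (gU : R -> R) M :
  (forall r, 0 < r -> gU r <= M) ->
  (forall r : R, 0 < r -> ((alphaU - r^-1 * gU r)%:E <= kappa U r)%E) ->
  forall z w, 0 < enorm (z - w) ->
  alphaU * enorm2 (z - w) - M * enorm (z - w) <= dotv (grad U z - grad U w) (z - w).
Proof.
move=> gM Hk z w r0.
have e2 : enorm2 (z - w) = enorm (z - w) ^+ 2 by rewrite /enorm sqr_sqrtr // enorm2_ge0.
have e0 : 0 < enorm2 (z - w) by rewrite e2 exprn_gt0.
have H2 : (kappa U (enorm (z - w)) <=
    (dotv (grad U z - grad U w) (z - w) / enorm2 (z - w))%:E)%E.
  by apply: ereal_inf_lbound; exists z, w.
have := le_trans (Hk _ r0) H2; rewrite lee_fin.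
rewrite ler_pdivlMr // => H; apply: le_trans H.
rewrite e2 mulrBl; apply: lerB => //.
have n0 : enorm (z - w) != 0 by rewrite gt_eqF.
set r := enorm (z - w) in n0 r0 *.
have -> : r^-1 * gU r * r ^+ 2 = gU r * r by field.
by rewrite ler_pM2r // gM.
Qed.


Lemma dU_dot d (U : 'rV[R]_d -> R) y v : differentiable U y ->
  'd U y v = dotv (grad U y) v.
Proof.
move=> dU; rewrite [in LHS](row_sum_delta v) linear_sum /dotv; apply: eq_bigr => i _.
by rewrite linearZ /= mxE /partialD deriveE // mulrC.
Qed.

Lemma phi_derive d (U : 'rV[R]_d -> R) x t : (forall y, differentiable U y) ->
  derivable (fun s : R => U (s *: x)) t 1 /\
  derive1 (fun s : R => U (s *: x)) t = dotv (grad U (t *: x)) x.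
Proof.
move=> dU.
have dc : differentiable (U \o ( *:%R^~ x)) t.
  apply: differentiable_comp => //.
split; first exact/derivable1_diffP.
rewrite derive1E deriveE // diff_comp // diff_val /= scale1r dU_dot //.
Qed.

Lemma U_lower d (U : 'rV[R]_d -> R) alphaU M : (forall y, differentiable U y) ->
  (forall z w, 0 < enorm (z - w) ->
  alphaU * enorm2 (z - w) - M * enorm (z - w) <= dotv (grad U z - grad U w) (z - w)) ->
  forall x, U 0 + dotv (grad U 0) x + alphaU / 2 * enorm2 x - M * enorm x <= U x.
Proof.
move=> dU Hk x.
have [e0|] := eqVneq (enorm2 x) 0.
  have x0 := enorm2_eq0 e0.
  rewrite e0 /enorm e0 sqrtr0 x0 /dotv big1 => [|i _]; last by rewrite [X in _ * X]mxE mulr0.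
  by rewrite !mulr0 !addr0 subr0.
move=> en0.
have e0 : 0 < enorm2 x by rewrite lt_neqAle eq_sym en0 enorm2_ge0.
have n0 : 0 < enorm x by rewrite sqrtr_gt0.
set e := enorm2 x in e0 en0 *; set n := enorm x in n0 *.
set g0 := dotv (grad U 0) x.
pose phi := fun s : R => U (s *: x).
pose a := alphaU / 2 * e; pose b := M * n.
pose psi := (phi - g0 \*: id - a \*: (id * id) + b \*: id : R -> R).
have Hd (s : R) : is_derive s (1 : R) psi (derive1 phi s - g0 - 2 * a * s + b).
  have [dp _] := phi_derive x s dU.
  have := derivableP dp.
  rewrite -derive1E => ?.
  apply: is_derive_eq; rewrite /GRing.scale /=; ring.
have psi01 : psi 0 <= psi 1.
  apply: (@ger0_derive1_ndecr _ psi 0 1) => //.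
  - move=> s; rewrite in_itv /= => /andP[s0 s1].
    rewrite derive1E derive_val.
    have [_ ->] := phi_derive x s dU.
    have := Hk (s *: x) 0; rewrite subr0 (enorm2Z s x) (enormZ x (ltW s0)) (dotvZ s) dotvB.
    move=> /(_ (mulr_gt0 s0 n0)).
    rewrite -/e -/n -/g0 /a /b => H.
    nra.
  - apply: continuous_subspaceT => s; apply: differentiable_continuous.
    by apply/derivable1_diffP; case: (Hd s).
move: psi01; rewrite /psi /phi !fctE /= scale0r scale1r !scaler0 mul0r scaler0 mulr1 /GRing.scale /=.
rewrite /a /b; lra.
Qed.

Lemma aux_sq (dl g x : R) : 0 < dl -> - (g * x) <= dl / 4 * (x * x) + g ^+ 2 / dl.
Proof.
move=> dl0; rewrite -subr_ge0.
have -> : dl / 4 * (x * x) + g ^+ 2 / dl - - (g * x) = (dl / 2 * x + g) ^+ 2 / dl.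
  by field; rewrite gt_eqF.
by rewrite divr_ge0 ?sqr_ge0 ?ltW.
Qed.

End S.

Theorem lemma31 (R : realType) (d : nat) (U : 'rV[R]_d -> R)
  (alphaU : R) (gU : R -> R) :
  C2 U ->
  lebint (fun x => (expR (- U x))%:E) = 1%E ->
  0 < alphaU ->
  classGt gU ->
  (forall r : R, 0 < r -> ((alphaU - r^-1 * gU r)%:E <= kappa U r)%E) ->
  forall sigma : R, 0 < sigma -> sigma < alphaU / 2 ->
  (lebint (fun x => (expR (sigma * enorm2 x) * expR (- U x))%:E) < +oo)%E.
Proof.
move=> [dU _] _ a0 [_ [M hM] _ _ _] Hk sigma s0 slt.
have HU := U_lower dU (kappa_bound hM Hk).
pose dl := alphaU / 2 - sigma.
have dl0 : 0 < dl by rewrite subr_gt0.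
pose s := Num.sqrt dl^-1.
have sn0 : s != 0 by rewrite gt_eqF // sqrtr_gt0 invr_gt0.
pose p := normal_pdf 0 s.
pose gsum := \sum_(i < d) (grad U 0 0 i) ^+ 2.
pose C := - U 0 + (gsum + M ^+ 2) / dl.
pose K := expR C / normal_peak s ^+ d.
have pk0 : 0 < normal_peak s by apply: normal_peak_gt0.
have K0 : 0 <= K by rewrite divr_ge0 ?expR_ge0 // exprn_ge0 // ltW.
have Hpt x : expR (sigma * enorm2 x) * expR (- U x) <= K * \prod_(i < d) p (x 0 i).
  have -> : \prod_(i < d) p (x 0 i) = normal_peak s ^+ d * expR (- (dl / 2 * enorm2 x)).
    rewrite /p; under eq_bigr do rewrite pdfE //.
    rewrite big_split /= prodr_const card_ord -expR_sum; congr (_ * expR _).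
    by rewrite /enorm2 /dotv mulr_sumr -sumrN; apply: eq_bigr => i _; rewrite expr2.
  rewrite /K mulrA divfK ?expf_neq0 ?gt_eqF // -!expRD ler_expR.
  have H1 := HU x.
  have H2 : - dotv (grad U 0) x <= dl / 4 * enorm2 x + gsum / dl.
    rewrite /dotv /enorm2 /gsum -sumrN mulr_sumr mulr_suml -big_split /=.
    apply: ler_sum => i _; rewrite !mxE; exact: aux_sq.
  have H3 : M * enorm x <= dl / 4 * enorm2 x + M ^+ 2 / dl.
    have -> : enorm2 x = enorm x * enorm x.
      by rewrite -expr2 /enorm sqr_sqrtr // enorm2_ge0.
    rewrite -[M * _]opprK -mulrN; have := aux_sq M (- enorm x) dl0.
    by rewrite mulrNN.
  rewrite /C /dl in H2 H3 *.
  have -> : (gsum + M ^+ 2) / (alphaU / 2 - sigma) = gsum / (alphaU / 2 - sigma) + M ^+ 2 / (alphaU / 2 - sigma) by rewrite mulrDl.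
  lra.
apply: (@le_lt_trans _ _ (lebint (fun x : 'rV[R]_d => (K * \prod_(i < d) p (x 0 i))%:E))).
  apply: lebint_le => x; first by rewrite lee_fin mulr_ge0 ?expR_ge0.
  by rewrite lee_fin.
apply: le_lt_trans (lebint_prod _ _ _ _ K0) (ltry _).
- by move=> t; apply: normal_pdf_ge0.
- exact: integrable_normal_pdf.
- exact: integral_normal_pdf.
Qed.
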